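(* Let $G$ and $H$ be countable discrete groups equipped with proper left-invariant metrics. If $G$ and $H$ have finite APC-decomposition complexity, then the wreath product $H\wr G$ (with a proper left-invariant metric) has finite APC-decomposition complexity.
   Context: $H\wr G=H^{(G)}\rtimes G$, where $H^{(G)}$ is the group of finitely supported functions $G\to H$ and $G$ acts by translation. Every countable group carries a proper left-invariant metric, unique up to coarse equivalence. A family $\mathcal{U}$ of metric subspaces of $(X,d)$ is $r$-disjoint if $d(x,y)>r$ whenever $x\in U$, $y\in U'$, $U\neq U'$ in $\mathcal{U}$. For families $\mathcal{X},\mathcal{Y}$ and $R\in\mathbb{R}^{\mathbb{N}}$, $\mathcal{X}\xrightarrow{R}\mathcal{Y}$ means: there is an integer $k$ such that for each $X\in\mathcal{X}$ there are subcollections $\mathcal{U}_1,\dots,\mathcal{U}_k\subseteq\mathcal{Y}$ of subspaces of $X$, each $\mathcal{U}_i$ being $R_i$-disjoint, with $\bigcup_i\mathcal{U}_i$ covering $X$. A family is bounded if the diameters of its members are uniformly bounded. $\mathfrak{C}_0$ is the class of bounded families; for an ordinal $\alpha>0$, $\mathfrak{C}_\alpha$ is the class of families $\mathcal{X}$ such that for every $R\in\mathbb{R}^{\mathbb{N}}$ there exist $\beta<\alpha$ and $\mathcal{Y}\in\mathfrak{C}_\beta$ with $\mathcal{X}\xrightarrow{R}\mathcal{Y}$. A metric space has finite APC-decomposition complexity if it is a member of some family belonging to $\mathfrak{C}_\alpha$ for some ordinal $\alpha$. *)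

(* Defs.v *)
From Stdlib Require Import Reals List.
Open Scope R_scope.
Set Implicit Arguments.

Record Group := {
  gcar :> Type;
  gmul : gcar -> gcar -> gcar;
  gone : gcar;
  ginv : gcar -> gcar;
  gassoc : forall x y z, gmul x (gmul y z) = gmul (gmul x y) z;
  gmul1l : forall x, gmul gone x = x;
  gmul1r : forall x, gmul x gone = x;
  gmulVl : forall x, gmul (ginv x) x = gone;
  gmulVr : forall x, gmul x (ginv x) = gone
}.

Definition countable_type (T : Type) : Prop :=
  exists f : T -> nat, forall x y, f x = f y -> x = y.

Definition is_metric {M : Type} (d : M -> M -> R) : Prop :=
  (forall x, d x x = 0) /\
  (forall x y, d x y = 0 -> x = y) /\
  (forall x y, d x y = d y x) /\
  (forall x y z, d x z <= d x y + d y z).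

(** proper: closed balls are finite (the space is discrete) *)
Definition proper_metric {M : Type} (d : M -> M -> R) : Prop :=
  forall x (r : R), exists l : list M, forall y, d x y <= r -> In y l.

Definition left_invariant {M : Type} (mul : M -> M -> M) (d : M -> M -> R) : Prop :=
  forall g x y, d (mul g x) (mul g y) = d x y.

Definition proper_left_invariant_metric {G : Group} (d : G -> G -> R) : Prop :=
  is_metric d /\ proper_metric d /\ left_invariant (@gmul G) d.

(** * Wreath product H wr G = H^(G) x| G *)
Definition finsupp (H G : Group) : Type :=
  { f : G -> H | exists l : list G, forall x, ~ In x l -> f x = gone H }.

Lemma finsupp_mul_proof (H G : Group) (f f' : finsupp H G) (g : G) :
  exists l : list G, forall x, ~ In x l ->
    gmul H (proj1_sig f x) (proj1_sig f' (gmul G (ginv G g) x)) = gone H.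
Proof.
  destruct f as [f [l1 H1]], f' as [f' [l2 H2]]; simpl.
  exists (l1 ++ map (gmul G g) l2). intros x Hx.
  rewrite H1, H2, gmul1l; auto.
  - intro Hin. apply Hx. apply in_or_app. right.
    replace x with (gmul G g (gmul G (ginv G g) x)).
    + apply in_map; exact Hin.
    + rewrite gassoc, gmulVr, gmul1l; reflexivity.
  - intro Hin. apply Hx. apply in_or_app. left. exact Hin.
Qed.

Definition wreath_car (H G : Group) : Type := (finsupp H G * G)%type.

(** (f,g)(f',g') = (f * (g . f'), g g'), where (g . f')(x) = f'(g^-1 x) *)
Definition wreath_mul (H G : Group) (a b : wreath_car H G) : wreath_car H G :=
  let (f, g) := a in let (f', g') := b in
  (exist _ (fun x => gmul H (proj1_sig f x) (proj1_sig f' (gmul G (ginv G g) x)))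
         (finsupp_mul_proof f f' g),
   gmul G g g').

Definition wreath_proper_left_invariant_metric {H G : Group}
  (d : wreath_car H G -> wreath_car H G -> R) : Prop :=
  is_metric d /\ proper_metric d /\ left_invariant (@wreath_mul H G) d.

(** A family of metric subspaces of (M,d): a collection of subsets of M. *)
Definition family (M : Type) := (M -> Prop) -> Prop.

Definition r_disjoint {M : Type} (d : M -> M -> R) (r : R) (U : family M) : Prop :=
  forall A B x y, U A -> U B -> A <> B -> A x -> B y -> d x y > r.

Definition bounded_family {M : Type} (d : M -> M -> R) (X : family M) : Prop :=
  exists b : R, forall A, X A -> forall x y, A x -> A y -> d x y <= b.

(** X --R--> Y (indices i = 1..k use R_i) *)
Definition decomposes {M : Type} (d : M -> M -> R) (Rs : nat -> R)
  (Xf Yf : family M) : Prop :=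
  exists k : nat, forall X, Xf X ->
    exists U : nat -> family M,
      (forall i, (1 <= i <= k)%nat ->
         (forall A, U i A -> Yf A /\ (forall x, A x -> X x)) /\
         r_disjoint d (Rs i) (U i)) /\
      (forall x, X x -> exists i A, (1 <= i <= k)%nat /\ U i A /\ A x).

(** The classes C_alpha, for alpha ranging in a well-ordered type (T, lt):
    C_alpha = bounded families if alpha is the least element (alpha = 0),
    otherwise families X such that for every R there are beta < alpha and
    Y in C_beta with X --R--> Y. *)
Inductive inC {M : Type} (d : M -> M -> R) {T : Type} (lt : T -> T -> Prop)
  : T -> family M -> Prop :=
| inC_zero : forall a X, (forall b, ~ lt b a) -> bounded_family d X -> inC d lt a X
| inC_step : forall a X,
    (forall Rs : nat -> R, exists b Y, lt b a /\ inC d lt b Y /\ decomposes d Rs X Y) ->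
    inC d lt a X.

Definition strict_well_order {T : Type} (lt : T -> T -> Prop) : Prop :=
  well_founded lt /\
  (forall a b c, lt a b -> lt b c -> lt a c) /\
  (forall a b, lt a b \/ a = b \/ lt b a).

(** (M,d) has finite APC-decomposition complexity: it is a member of some
    family in C_alpha for some ordinal alpha (ordinals = strict well-orders). *)
Definition finite_APC {M : Type} (d : M -> M -> R) : Prop :=
  exists (T : Type) (lt : T -> T -> Prop) (a : T) (X : family M),
    strict_well_order lt /\ inC d lt a X /\ X (fun _ => True).

(* Main.v *)
From Stdlib Require Import Reals List Lra Lia Classical FunctionalExtensionality PropExtensionality ProofIrrelevance IndefiniteDescription ClassicalEpsilon Wellfounded Arith.
Require Import Defs.
Open Scope R_scope.

Lemma choice_fun {A B : Type} (P : A -> B -> Prop) :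
  (forall a, exists b, P a b) -> exists f : A -> B, forall a, P a (f a).
Proof.
  intros H. exists (fun a => proj1_sig (constructive_indefinite_description _ (H a))).
  intros a. exact (proj2_sig (constructive_indefinite_description _ (H a))).
Qed.

Lemma list_max {A : Type} (F : A -> R) (l : list A) :
  exists m, forall z, In z l -> F z <= m.
Proof.
  induction l as [|a l [m Hm]].
  - exists 0. intros z [].
  - exists (Rmax (F a) m). intros z [<-|Hz].
    + apply Rmax_l.
    + eapply Rle_trans; [apply Hm; exact Hz| apply Rmax_r].
Qed.

Lemma ball_bound {A : Type} (d : A -> A -> R) (c : A) (F : A -> R) :
  proper_metric d -> exists s : R -> R, forall t z, d c z <= t -> F z <= s t.
Proof.
  intros Hp. apply (choice_fun (fun t m => forall z, d c z <= t -> F z <= m)). intros t.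
  destruct (Hp c t) as [l Hl]. destruct (list_max F l) as [m Hm].
  exists m. intros z Hz. apply Hm, Hl, Hz.
Qed.

Lemma decomp_self {M} (d : M -> M -> R) Rs (X : family M) : decomposes d Rs X X.
Proof.
  exists 1%nat. intros X0 HX0. exists (fun _ A => A = X0). split.
  - intros i Hi. split.
    + intros A ->. split; auto.
    + intros A B x y -> -> Hne. exfalso; apply Hne; reflexivity.
  - intros x Hx. exists 1%nat, X0. repeat split; auto.
Qed.

Lemma bounded_any {M} (d : M -> M -> R) {T} (lt : T -> T -> Prop) :
  well_founded lt -> forall a X, bounded_family d X -> inC d lt a X.
Proof.
  intros Hwf a. induction a as [a IH] using (well_founded_ind Hwf).
  intros X HX. destruct (classic (exists b, lt b a)) as [[b Hb]|Hn].
  - apply inC_step. intros Rs. exists b, X.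
    split; [exact Hb| split; [apply IH; auto | apply decomp_self]].
  - apply inC_zero; auto. intros b Hb. apply Hn. eauto.
Qed.

Lemma inC_mono {M} (d : M -> M -> R) {T} (lt : T -> T -> Prop) :
  well_founded lt -> (forall a b c, lt a b -> lt b c -> lt a c) ->
  forall a X, inC d lt a X -> forall c, a = c \/ lt a c -> inC d lt c X.
Proof.
  intros Hwf Htr a X H c [<-|Hac]; auto.
  inversion H as [a0 X0 Hmin Hb| a0 X0 Hs]; subst.
  - apply bounded_any; auto.
  - apply inC_step. intros Rs. destruct (Hs Rs) as (b & Y & Hb & HY & HD).
    exists b, Y. split; [eauto|split; auto].
Qed.

Lemma inC_embed {M} (d : M -> M -> R) {T1 T2} (lt1 : T1 -> T1 -> Prop)
  (lt2 : T2 -> T2 -> Prop) (e : T1 -> T2) :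
  well_founded lt1 -> well_founded lt2 -> (forall x y, lt1 x y -> lt2 (e x) (e y)) ->
  forall b X, inC d lt1 b X -> inC d lt2 (e b) X.
Proof.
  intros W1 W2 He b. induction b as [b IH] using (well_founded_ind W1).
  intros X H. inversion H as [a0 X0 Hmin Hb| a0 X0 Hs]; subst.
  - apply bounded_any; auto.
  - apply inC_step. intros Rs. destruct (Hs Rs) as (b' & Y & Hb & HY & HD).
    exists (e b'), Y. split; [auto|split; [apply IH; auto|auto]].
Qed.

Definition pull_hyp {M M'} (d : M -> M -> R) (d' : M' -> M' -> R)
  (X : family M) (X' : family M') (rho sigma : R -> R) : Prop :=
  forall S', X' S' -> exists S (c : M' -> M), X S /\ (forall x, S' x -> S (c x)) /\
    (forall x y t, S' x -> S' y -> d (c x) (c y) <= t -> d' x y <= rho t) /\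
    (forall x y t, S' x -> S' y -> d' x y <= t -> d (c x) (c y) <= sigma t).

Lemma pull {M M'} (d : M -> M -> R) (d' : M' -> M' -> R) {T} (lt : T -> T -> Prop) :
  well_founded lt -> forall a X, inC d lt a X ->
  forall X' rho sigma, pull_hyp d d' X X' rho sigma -> inC d' lt a X'.
Proof.
  intros Hwf a. induction a as [a IH] using (well_founded_ind Hwf).
  intros X H X' rho sigma Hp. inversion H as [a0 X0 Hmin Hbd| a0 X0 Hst]; subst.
  - apply inC_zero; auto. destruct Hbd as [b Hb]. exists (rho b).
    intros S' HS' x y Hx Hy. destruct (Hp S' HS') as (S & c & HS & Hc & Hr & _).
    apply (Hr x y b Hx Hy). apply (Hb S HS); auto.
  - apply inC_step. intros Rs.
    destruct (Hst (fun i => sigma (Rs i))) as (b & Y & Hb & HY & [k HD]).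
    set (Y' := fun S'' : M' -> Prop => exists A (c : M' -> M), Y A /\ (forall x, S'' x -> A (c x)) /\
      (forall x y t, S'' x -> S'' y -> d (c x) (c y) <= t -> d' x y <= rho t) /\
      (forall x y t, S'' x -> S'' y -> d' x y <= t -> d (c x) (c y) <= sigma t)).
    exists b, Y'. split; [exact Hb|split].
    + apply (IH b Hb Y HY Y' rho sigma). intros S'' HS''. exact HS''.
    + exists k. intros S' HS'. destruct (Hp S' HS') as (S & c & HS & Hc & Hr & Hs).
      destruct (HD S HS) as (U & HU & Hcov).
      exists (fun i S'' => exists A, U i A /\ S'' = (fun x => S' x /\ A (c x))). split.
      * intros i Hi. destruct (HU i Hi) as [HU1 HU2]. split.
        -- intros S'' (A & HA & ->). destruct (HU1 A HA) as [HYA HAS]. split.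
           ++ exists A, c. split; [exact HYA|]. split; [intros x [_ Hx]; exact Hx|]. split.
              ** intros x y t [Hx _] [Hy _]. apply Hr; auto.
              ** intros x y t [Hx _] [Hy _]. apply Hs; auto.
           ++ intros x [Hx _]; exact Hx.
        -- intros S1 S2 x y (A1 & HA1 & ->) (A2 & HA2 & ->) Hne [Hx HAx] [Hy HAy].
           assert (Hne' : A1 <> A2) by (intros ->; apply Hne; reflexivity).
           specialize (HU2 A1 A2 (c x) (c y) HA1 HA2 Hne' HAx HAy). simpl in HU2.
           destruct (Rle_or_lt (d' x y) (Rs i)) as [Hle|Hlt]; [|exact Hlt].
           exfalso. specialize (Hs x y (Rs i) Hx Hy Hle). lra.
      * intros x Hx. destruct (Hcov (c x) (Hc x Hx)) as (i & A & Hi & HA & HAx).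
        exists i, (fun z => S' z /\ A (c z)). split; [exact Hi|].
        split; [exists A; split; auto|]. split; auto.
Qed.

Definition pre {M M'} (D : M -> Prop) (p : M -> M') (A : family M') : family M :=
  fun S => exists B, A B /\ S = (fun x => D x /\ B (p x)).

Lemma fiber {M M'} (d : M -> M -> R) (d' : M' -> M' -> R) (p : M -> M') (D : M -> Prop)
  (sigma : R -> R) {T T2} (lt : T -> T -> Prop) (lt2 : T2 -> T2 -> Prop) (phi : T2 -> T) (b : T) :
  well_founded lt -> (forall a b c, lt a b -> lt b c -> lt a c) -> well_founded lt2 ->
  (forall x y, lt2 x y -> lt (phi x) (phi y)) ->
  (forall x, b = phi x \/ lt b (phi x)) ->
  (forall x y t, D x -> D y -> d x y <= t -> d' (p x) (p y) <= sigma t) ->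
  (forall A, bounded_family d' A -> inC d lt b (pre D p A)) ->
  forall a A, inC d' lt2 a A -> inC d lt (phi a) (pre D p A).
Proof.
  intros Hwf Htr Hwf2 Hphi Hb Hsig Hfib a.
  induction a as [a IH] using (well_founded_ind Hwf2).
  intros A H. inversion H as [a0 X0 Hmin Hbd| a0 X0 Hst]; subst.
  - eapply inC_mono; eauto.
  - apply inC_step. intros Rs.
    destruct (Hst (fun i => sigma (Rs i))) as (a' & Y & Ha' & HY & [k HD]).
    exists (phi a'), (pre D p Y). split; [auto|split; [apply IH; auto|]].
    exists k. intros S (B & HB & ->). destruct (HD B HB) as (U & HU & Hcov).
    exists (fun i S'' => exists B', U i B' /\ S'' = (fun x => D x /\ B' (p x))). split.
    + intros i Hi. destruct (HU i Hi) as [HU1 HU2]. split.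
      * intros S'' (B' & HB' & ->). destruct (HU1 B' HB') as [HYB HBB]. split.
        -- exists B'. split; auto.
        -- intros x [Dx Bx]. split; auto.
      * intros S1 S2 x y (A1 & HA1 & ->) (A2 & HA2 & ->) Hne [Dx HAx] [Dy HAy].
        assert (Hne' : A1 <> A2) by (intros ->; apply Hne; reflexivity).
        specialize (HU2 A1 A2 (p x) (p y) HA1 HA2 Hne' HAx HAy). simpl in HU2.
        destruct (Rle_or_lt (d x y) (Rs i)) as [Hle|Hlt]; [|exact Hlt].
        exfalso. specialize (Hsig x y (Rs i) Dx Dy Hle). lra.
    + intros x [Dx Bx]. destruct (Hcov (p x) Bx) as (i & B' & Hi & HB' & HBx).
      exists i, (fun z => D z /\ B' (p z)). split; [exact Hi|].
      split; [exists B'; split; auto|]. split; auto.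
Qed.

Lemma pull_id {M} (d : M -> M -> R) {T} (lt : T -> T -> Prop) a (X X' : family M) :
  well_founded lt -> inC d lt a X ->
  (forall S', X' S' -> exists S, X S /\ forall x, S' x -> S x) -> inC d lt a X'.
Proof.
  intros Hwf H Hs. apply (pull d d lt Hwf a X H X' (fun t => t) (fun t => t)).
  intros S' HS'. destruct (Hs S' HS') as (S & HS & Hsub). exists S, (fun x => x).
  split; auto.
Qed.

Lemma ginv_mul_cancel (G : Group) (a b : G) : gmul G (ginv G a) (gmul G a b) = b.
Proof. rewrite gassoc, gmulVl, gmul1l. reflexivity. Qed.
Lemma mul_ginv_cancel (G : Group) (a b : G) : gmul G a (gmul G (ginv G a) b) = b.
Proof. rewrite gassoc, gmulVr, gmul1l. reflexivity. Qed.
Lemma ginv_ginv (G : Group) (a : G) : ginv G (ginv G a) = a.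
Proof.
  rewrite <- (gmul1r G (ginv G (ginv G a))). rewrite <- (gmulVl G a).
  rewrite gassoc, gmulVl, gmul1l. reflexivity.
Qed.
Lemma ginv_one (G : Group) : ginv G (gone G) = gone G.
Proof. rewrite <- (gmul1r G (ginv G (gone G))). apply gmulVl. Qed.
Lemma gmul_cancel_l (G : Group) (a b c : G) : gmul G a b = gmul G a c -> b = c.
Proof. intros E. rewrite <- (ginv_mul_cancel G a b), E, ginv_mul_cancel. reflexivity. Qed.
Lemma inv_eq_one (G : Group) (a b : G) : gmul G (ginv G a) b = gone G -> a = b.
Proof. intros E. rewrite <- (mul_ginv_cancel G a b), E, gmul1r. reflexivity. Qed.

Lemma metric_inv (G : Group) (d : G -> G -> R) : left_invariant (gmul G) d ->
  forall a b, d a b = d (gone G) (gmul G (ginv G a) b).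
Proof. intros Hl a b. rewrite <- (Hl (ginv G a) a b), gmulVl. reflexivity. Qed.

Definition fv {H G : Group} (w : wreath_car H G) (v : G) : H := proj1_sig (fst w) v.

Lemma one_proof (H G : Group) : exists l : list G, forall x : G, ~ In x l -> gone H = gone H.
Proof. exists nil. auto. Qed.
Definition fs_one (H G : Group) : finsupp H G :=
  exist _ (fun _ : G => gone H) (one_proof H G).

Definition we (H G : Group) : wreath_car H G := (fs_one H G, gone G).

Lemma winv_proof (H G : Group) (f : finsupp H G) (g : G) :
  exists l : list G, forall x, ~ In x l -> ginv H (proj1_sig f (gmul G g x)) = gone H.
Proof.
  destruct f as [f [l Hl]]; simpl. exists (map (gmul G (ginv G g)) l).
  intros x Hx. rewrite Hl. apply ginv_one. intro Hin. apply Hx.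
  rewrite <- (ginv_mul_cancel G g x). apply in_map; auto.
Qed.

Definition winv {H G : Group} (w : wreath_car H G) : wreath_car H G :=
  let (f, g) := w in
  (exist _ (fun x => ginv H (proj1_sig f (gmul G g x))) (winv_proof _ _ f g), ginv G g).

Lemma wext (H G : Group) (f f' : finsupp H G) (g g' : G) :
  (forall v, proj1_sig f v = proj1_sig f' v) -> g = g' ->
  ((f, g) : wreath_car H G) = (f', g').
Proof.
  intros Hf <-. destruct f as [f pf], f' as [f' pf']. simpl in Hf.
  assert (f = f') by (apply functional_extensionality; auto). subst.
  f_equal. f_equal. apply proof_irrelevance.
Qed.

Lemma wmul_e_r (H G : Group) (w : wreath_car H G) : wreath_mul w (we H G) = w.
Proof.
  destruct w as [f g]. simpl. apply wext.
  - intros v. simpl. apply gmul1r.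
  - apply gmul1r.
Qed.

Lemma winv_l (H G : Group) (w : wreath_car H G) : wreath_mul (winv w) w = we H G.
Proof.
  destruct w as [f g]. simpl. apply wext.
  - intros v. simpl. rewrite ginv_ginv. apply gmulVl.
  - apply gmulVl.
Qed.

Lemma snd_inv_mul (H G : Group) (w w' : wreath_car H G) :
  snd (wreath_mul (winv w) w') = gmul G (ginv G (snd w)) (snd w').
Proof. destruct w, w'; reflexivity. Qed.

Lemma fv_inv_mul (H G : Group) (w w' : wreath_car H G) v :
  fv (wreath_mul (winv w) w') v =
  gmul H (ginv H (fv w (gmul G (snd w) v))) (fv w' (gmul G (snd w) v)).
Proof. destruct w, w'; unfold fv; simpl. rewrite ginv_ginv. reflexivity. Qed.

Lemma wd_inv (H G : Group) (d : wreath_car H G -> wreath_car H G -> R) :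
  left_invariant (@wreath_mul H G) d ->
  forall x y, d x y = d (we H G) (wreath_mul (winv x) y).
Proof. intros Hl x y. rewrite <- (Hl (winv x) x y), winv_l. reflexivity. Qed.

Lemma wd_mul (H G : Group) (d : wreath_car H G -> wreath_car H G -> R) :
  left_invariant (@wreath_mul H G) d ->
  forall x z, d x (wreath_mul x z) = d (we H G) z.
Proof. intros Hl x z. rewrite <- (Hl x (we H G) z), wmul_e_r. reflexivity. Qed.

Lemma wdrop (H G : Group) (a : finsupp H G) (u : G) :
  wreath_mul ((a, u) : wreath_car H G) (fs_one H G, ginv G u) = (a, gone G).
Proof. simpl. apply wext; [intros v; simpl; apply gmul1r | apply gmulVr]. Qed.

Definition inK {H G : Group} (L : list G) (w : wreath_car H G) : Prop :=
  (forall v, ~ In v L -> fv w v = gone H) /\ snd w = gone G.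

Definition dec (P : Prop) : bool := if excluded_middle_informative P then true else false.

Lemma kill_proof (H G : Group) (x : G) (f : finsupp H G) :
  exists l : list G, forall v, ~ In v l ->
    (if excluded_middle_informative (v = x) then gone H else proj1_sig f v) = gone H.
Proof.
  destruct f as [f [l Hl]]; simpl. exists l. intros v Hv.
  destruct (excluded_middle_informative (v = x)); auto.
Qed.

Definition kill {H G : Group} (x : G) (w : wreath_car H G) : wreath_car H G :=
  (exist _ (fun v => if excluded_middle_informative (v = x) then gone H else proj1_sig (fst w) v)
    (kill_proof _ _ x (fst w)), snd w).

Lemma ex_proof (H G : Group) (x : G) (h : H) :
  exists l : list G, forall v, ~ In v l ->
    (if excluded_middle_informative (v = x) then h else gone H) = gone H.
Proof.
  exists (x :: nil). intros v Hv.
  destruct (excluded_middle_informative (v = x)); auto. subst. exfalso; apply Hv; left; auto.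
Qed.

Definition exs {H G : Group} (x : G) (h : H) : wreath_car H G :=
  (exist _ (fun v => if excluded_middle_informative (v = x) then h else gone H) (ex_proof H G x h),
   gone G).

Lemma kill_decomp (H G : Group) (x : G) (z : wreath_car H G) : snd z = gone G ->
  z = wreath_mul (kill x z) (exs x (fv z x)).
Proof.
  destruct z as [f g]. simpl. intros ->. apply wext.
  - intros v. simpl. rewrite ginv_one, gmul1l. unfold fv; simpl.
    destruct (excluded_middle_informative (v = x)) as [->|n].
    + rewrite gmul1l. reflexivity.
    + rewrite gmul1r. reflexivity.
  - rewrite gmul1l. reflexivity.
Qed.

Lemma kill_inv_mul (H G : Group) (x : G) (w w' : wreath_car H G) :
  snd w = gone G -> snd w' = gone G ->
  kill x (wreath_mul (winv w) w') = wreath_mul (winv (kill x w)) (kill x w').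
Proof.
  destruct w as [f g], w' as [f' g']. simpl. intros -> ->. apply wext.
  - intros v. simpl. rewrite ginv_ginv, !gmul1l.
    destruct (excluded_middle_informative (v = x)).
    + rewrite ginv_one, gmul1l. reflexivity.
    + reflexivity.
  - reflexivity.
Qed.

Definition Tt (TH TG : Type) := ((nat * TH) + TG)%type.
Definition ltT {TH TG : Type} (ltH : TH -> TH -> Prop) (ltG : TG -> TG -> Prop)
  (x y : Tt TH TG) : Prop :=
  match x, y with
  | inl (m, h), inl (m', h') => (m < m')%nat \/ (m = m' /\ ltH h h')
  | inl _, inr _ => True
  | inr g, inr g' => ltG g g'
  | inr _, inl _ => False
  end.

Lemma ltT_wf {TH TG} (ltH : TH -> TH -> Prop) (ltG : TG -> TG -> Prop) :
  well_founded ltH -> well_founded ltG -> well_founded (ltT ltH ltG).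
Proof.
  intros WH WG.
  assert (AL : forall m h, Acc (ltT ltH ltG) (inl (m, h))).
  { intros m. induction m as [m IHm] using (well_founded_ind lt_wf).
    intros h. induction h as [h IHh] using (well_founded_ind WH).
    constructor. intros [[m' h']|g'] Hy; simpl in Hy; try contradiction.
    destruct Hy as [Hy|[-> Hy]]; auto. }
  intros [[m h]|g]; auto.
  induction g as [g IHg] using (well_founded_ind WG).
  constructor. intros [[m' h']|g'] Hy; simpl in Hy; auto.
Qed.

Lemma ltT_trans {TH TG} (ltH : TH -> TH -> Prop) (ltG : TG -> TG -> Prop) :
  (forall a b c, ltH a b -> ltH b c -> ltH a c) ->
  (forall a b c, ltG a b -> ltG b c -> ltG a c) ->
  forall a b c, ltT ltH ltG a b -> ltT ltH ltG b c -> ltT ltH ltG a c.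
Proof.
  intros TrH TrG [[m1 h1]|g1] [[m2 h2]|g2] [[m3 h3]|g3]; simpl; intros; try tauto; eauto.
  destruct H as [H|[-> H]], H0 as [H0|[-> H0]]; try (left; lia); auto.
  right; split; eauto.
Qed.

Lemma ltT_tri {TH TG} (ltH : TH -> TH -> Prop) (ltG : TG -> TG -> Prop) :
  (forall a b, ltH a b \/ a = b \/ ltH b a) ->
  (forall a b, ltG a b \/ a = b \/ ltG b a) ->
  forall a b, ltT ltH ltG a b \/ a = b \/ ltT ltH ltG b a.
Proof.
  intros TH3 TG3 [[m1 h1]|g1] [[m2 h2]|g2]; simpl; auto.
  - destruct (Nat.lt_trichotomy m1 m2) as [H|[->|H]]; auto.
    destruct (TH3 h1 h2) as [H|[->|H]]; auto.
  - destruct (TG3 g1 g2) as [H|[->|H]]; subst; auto.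
Qed.

Lemma wext2 (H G : Group) (z z' : wreath_car H G) :
  (forall v, fv z v = fv z' v) -> snd z = snd z' -> z = z'.
Proof. destruct z, z'; simpl; intros; apply wext; auto. Qed.

Definition SK {H G : Group} (L : list G) : family (wreath_car H G) :=
  fun S => forall w, S w -> inK L w.

Lemma K_lemma (G H : Group) (dH : H -> H -> R) (d : wreath_car H G -> wreath_car H G -> R)
  (TH TG : Type) (ltH : TH -> TH -> Prop) (ltG : TG -> TG -> Prop) (aH : TH) :
  proper_left_invariant_metric dH -> wreath_proper_left_invariant_metric d ->
  well_founded ltH -> well_founded ltG ->
  (forall a b c, ltH a b -> ltH b c -> ltH a c) ->
  (forall a b c, ltG a b -> ltG b c -> ltG a c) ->
  inC dH ltH aH (fun _ => True) ->
  forall L : list G, inC d (ltT ltH ltG) (inl (length L, aH)) (SK L).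
Proof.
  intros [_ [HpH HlH]] [[Hm0 [Hm1 [Hsym Htri]]] [Hp Hl]] WH WG TrH TrG HSH.
  assert (WT := ltT_wf ltH ltG WH WG). assert (TrT := ltT_trans ltH ltG TrH TrG).
  induction L as [|x L' IH].
  - apply bounded_any; auto. exists 0. intros S HS w w' Hw Hw'.
    destruct (HS w Hw) as [Fw Sw], (HS w' Hw') as [Fw' Sw'].
    rewrite (wd_inv H G d Hl).
    assert (E : wreath_mul (winv w) w' = we H G).
    { apply wext2.
      - intros v. rewrite fv_inv_mul, Sw, gmul1l, Fw, Fw' by auto.
        rewrite ginv_one, gmul1l. reflexivity.
      - rewrite snd_inv_mul, Sw, Sw', ginv_one, gmul1l. reflexivity. }
    rewrite E, Hm0. lra.
  - set (phi := fun z : Tt TH TG => match z with inl (m, h) => inl (S m, h) | inr g => inr g end).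
    set (D := inK (H:=H) (x :: L')).
    destruct (ball_bound d (we H G) (fun z => d (we H G) (kill x z)) Hp) as [s Hs].
    assert (Hpre : inC d (ltT ltH ltG) (phi (inl (length L', aH))) (pre D (kill x) (SK L'))).
    { apply (fiber d d (kill x) D s (ltT ltH ltG) (ltT ltH ltG) phi (inl (0%nat, aH))); auto.
      - intros [[m h]|g] [[m' h']|g'] Hy; simpl in *; auto.
        destruct Hy as [Hy|[-> Hy]]; [left; lia| right; auto].
      - intros [[m h]|g]; right; simpl; auto. left; lia.
      - intros w w' t Dw Dw' Hd.
        rewrite (wd_inv H G d Hl (kill x w)), <- kill_inv_mul by (destruct Dw, Dw'; auto).
        apply Hs. rewrite <- wd_inv; auto.
      - intros A [r Hr].
        assert (HSH' : inC dH (ltT ltH ltG) (inl (0%nat, aH)) (fun _ => True)).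
        { apply (inC_embed dH ltH (ltT ltH ltG) (fun h => inl (0%nat, h))); auto.
          intros; simpl; auto. }
        destruct (ball_bound dH (gone H) (fun h => d (we H G) (exs x h)) HpH) as [psi Hpsi].
        destruct (ball_bound d (we H G) (fun z => dH (gone H) (fv z x)) Hp) as [s2 Hs2].
        apply (pull dH d (ltT ltH ltG) WT _ _ HSH' _ (fun t => r + psi t) s2).
        intros S' (B & HB & ->). exists (fun _ => True), (fun w => fv w x).
        split; [exact I|]. split; [auto|]. split.
        + intros x0 y0 t [Dx Bx] [Dy By] Ht.
          rewrite (wd_inv H G d Hl x0 y0).
          set (z := wreath_mul (winv x0) y0).
          assert (Sz : snd z = gone G).
          { unfold z. rewrite snd_inv_mul. destruct Dx as [_ ->], Dy as [_ ->].
            rewrite ginv_one, gmul1l. reflexivity. }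
          rewrite (kill_decomp H G x z Sz) at 1.
          eapply Rle_trans; [apply (Htri _ (kill x z))|].
          rewrite wd_mul by auto.
          apply Rplus_le_compat.
          * unfold z. rewrite kill_inv_mul by (destruct Dx, Dy; auto).
            rewrite <- wd_inv by auto. apply (Hr B HB); auto.
          * apply Hpsi. unfold z. rewrite fv_inv_mul.
            destruct Dx as [_ ->]. rewrite gmul1l, <- metric_inv by auto. exact Ht.
        + intros x0 y0 t [Dx Bx] [Dy By] Ht.
          rewrite (metric_inv H dH HlH).
          assert (E : gmul H (ginv H (fv x0 x)) (fv y0 x) = fv (wreath_mul (winv x0) y0) x).
          { rewrite fv_inv_mul. destruct Dx as [_ ->]. rewrite gmul1l. reflexivity. }
          rewrite E. apply Hs2. rewrite <- wd_inv; auto. }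
    apply (pull_id d (ltT ltH ltG) _ _ _ WT Hpre).
    intros S' HS'. exists (fun w => D w /\ inK L' (kill x w)). split.
    + exists (inK L'). split; auto. intros w Hw; exact Hw.
    + intros w Hw. destruct (HS' w Hw) as [Fw Sw]. split; [split; auto|].
      split; [|exact Sw]. intros v Hv. unfold fv, kill; simpl.
      destruct (excluded_middle_informative (v = x)); auto.
      apply Fw. intros [E|E]; auto.
Qed.

Definition famr {H G : Group} (dG : G -> G -> R) (r : R) : family (wreath_car H G) :=
  fun S => exists g0, forall w, S w -> dG g0 (snd w) <= r.

Lemma famr_lemma (G H : Group) (dG : G -> G -> R) (dH : H -> H -> R)
  (d : wreath_car H G -> wreath_car H G -> R)
  (TH TG : Type) (ltH : TH -> TH -> Prop) (ltG : TG -> TG -> Prop) (aH : TH) (gmin : TG) :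
  proper_left_invariant_metric dG ->
  proper_left_invariant_metric dH -> wreath_proper_left_invariant_metric d ->
  well_founded ltH -> well_founded ltG ->
  (forall a b c, ltH a b -> ltH b c -> ltH a c) ->
  (forall a b c, ltG a b -> ltG b c -> ltG a c) ->
  inC dH ltH aH (fun _ => True) ->
  forall r, inC d (ltT ltH ltG) (inr gmin) (famr dG r).
Proof.
  intros HG HH Hd WH WG TrH TrG HSH.
  pose proof (K_lemma G H dH d TH TG ltH ltG aH HH Hd WH WG TrH TrG HSH) as HK.
  destruct HG as [_ [HpG HlG]].
  destruct Hd as [[Hm0 [Hm1 [Hsym Htri]]] [Hp Hl]].
  assert (WT := ltT_wf ltH ltG WH WG).
  intros r. apply inC_step. intros Rs. set (R0 := Rs 1%nat).
  destruct (Hp (we H G) R0) as [lR HlR].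
  assert (HFR : exists FR, forall z, In z lR -> forall v, ~ In v FR -> fv z v = gone H).
  { clear HlR. induction lR as [|a l [FR HF]].
    - exists nil. intros z [].
    - destruct (proj2_sig (fst a)) as [la Hla].
      exists (la ++ FR). intros z [<-|Hz] v Hv.
      + apply Hla. intro; apply Hv; apply in_or_app; auto.
      + apply (HF z Hz). intro; apply Hv; apply in_or_app; auto. }
  destruct HFR as [FR HFR].
  destruct (HpG (gone G) r) as [Br HBr].
  set (Fs := flat_map (fun u => map (gmul G u) FR) Br).
  destruct (ball_bound dG (gone G) (fun u => d (we H G) (fs_one H G, ginv G u)) HpG) as [sf Hsf].
  set (s := sf r).
  set (agr := fun g0 (w w0 : wreath_car H G) =>
         forall v, ~ In v (map (gmul G g0) Fs) -> fv w v = fv w0 v).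
  set (YY := fun P : wreath_car H G -> Prop => exists g0 (w0 : wreath_car H G),
         forall w, P w -> dG g0 (snd w) <= r /\ agr g0 w w0).
  exists (inl (length Fs, aH)), YY. split; [exact I|]. split.
  - apply (pull d d (ltT ltH ltG) WT _ _ (HK Fs) YY (fun t => t + 2 * s) (fun t => t + 2 * s)).
    intros P (g0 & w0 & HP).
    set (tr := ((fst w0, g0) : wreath_car H G)).
    set (c := fun w => ((fst (wreath_mul (winv tr) w), gone G) : wreath_car H G)).
    assert (Hc : forall w, P w -> d (wreath_mul (winv tr) w) (c w) <= s).
    { intros w Hw. unfold c.
      rewrite <- (wdrop H G (fst (wreath_mul (winv tr) w)) (snd (wreath_mul (winv tr) w))).
      rewrite <- surjective_pairing. rewrite wd_mul by auto. apply Hsf.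
      rewrite snd_inv_mul. unfold tr; simpl snd. rewrite <- metric_inv by auto.
      apply (HP w Hw). }
    exists (inK Fs), c. split; [intros w Hw; exact Hw|]. split; [|split].
    + intros w Hw. destruct (HP w Hw) as [Hr Hag]. split; [|reflexivity].
      intros v Hv. change (fv (wreath_mul (winv tr) w) v = gone H).
      rewrite fv_inv_mul. unfold tr; simpl snd. rewrite (Hag (gmul G g0 v)).
      * exact (gmulVl H (fv w0 (gmul G g0 v))).
      * intros Hin. apply in_map_iff in Hin. destruct Hin as [v' [E Hv']].
        apply gmul_cancel_l in E. subst. contradiction.
    + intros x y t Hx Hy Ht.
      rewrite <- (Hl (winv tr) x y).
      pose proof (Hc x Hx) as E1. pose proof (Hc y Hy) as E2.
      pose proof (Htri (wreath_mul (winv tr) x) (c x) (wreath_mul (winv tr) y)) as E3.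
      pose proof (Htri (c x) (c y) (wreath_mul (winv tr) y)) as E4.
      rewrite (Hsym (c y)) in E4. lra.
    + intros x y t Hx Hy Ht.
      rewrite <- (Hl (winv tr) x y) in Ht.
      pose proof (Hc x Hx) as E1. pose proof (Hc y Hy) as E2.
      pose proof (Htri (c x) (wreath_mul (winv tr) x) (c y)) as E3.
      pose proof (Htri (wreath_mul (winv tr) x) (wreath_mul (winv tr) y) (c y)) as E4.
      rewrite (Hsym (c x) (wreath_mul (winv tr) x)) in E3. lra.
  - exists 1%nat. intros S [g0 Hg0].
    exists (fun _ P => exists w0, S w0 /\ P = (fun w => S w /\ agr g0 w w0)). split.
    + intros i Hi. assert (i = 1%nat) by lia. subst i. split.
      * intros P (w0 & Hw0 & ->). split.
        -- exists g0, w0. intros w [Sw Ag]. split; auto.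
        -- intros w [Sw _]; exact Sw.
      * intros P1 P2 x y (w1 & Hw1 & ->) (w2 & Hw2 & ->) Hne [Sx Ax] [Sy Ay].
        destruct (Rle_or_lt (d x y) R0) as [Hle|Hlt]; [|exact Hlt]. exfalso. apply Hne.
        assert (Hxy : agr g0 x y).
        { intros v Hv.
          assert (Hq : In (wreath_mul (winv x) y) lR).
          { apply HlR. rewrite <- wd_inv; auto. }
          set (u := gmul G (ginv G (snd x)) v).
          assert (gu : gmul G (snd x) u = v) by apply mul_ginv_cancel.
          destruct (classic (In u FR)) as [Hu|Hu].
          - exfalso. apply Hv. apply in_map_iff.
            exists (gmul G (gmul G (ginv G g0) (snd x)) u). split.
            + rewrite gassoc, mul_ginv_cancel. exact gu.
            + apply in_flat_map. exists (gmul G (ginv G g0) (snd x)). split.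
              * apply HBr. rewrite <- metric_inv by auto. apply Hg0; auto.
              * apply in_map; auto.
          - pose proof (HFR _ Hq u Hu) as E. rewrite fv_inv_mul, gu in E.
            apply inv_eq_one in E. exact E. }
        apply functional_extensionality; intro w; apply propositional_extensionality.
        split; intros [Sw Aw]; split; auto; intros v Hv.
        -- rewrite (Aw v Hv), <- (Ax v Hv), (Hxy v Hv), (Ay v Hv). reflexivity.
        -- rewrite (Aw v Hv), <- (Ay v Hv), <- (Hxy v Hv), (Ax v Hv). reflexivity.
    + intros w Sw. exists 1%nat, (fun w' => S w' /\ agr g0 w' w). split; [lia|].
      split; [exists w; auto|]. split; auto. intros v Hv; reflexivity.
Qed.

Lemma exists_min {T} (lt : T -> T -> Prop) : well_founded lt -> forall a : T,
  exists m, forall z, ~ lt z m.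
Proof.
  intros Hwf a. induction a as [a IH] using (well_founded_ind Hwf).
  destruct (classic (exists z, lt z a)) as [[z Hz]|Hn]; eauto.
Qed.

Lemma all_fam {M} (d : M -> M -> R) {T} (lt : T -> T -> Prop) (a : T) (X : family M) :
  well_founded lt -> inC d lt a X -> X (fun _ => True) -> inC d lt a (fun _ => True).
Proof.
  intros Hwf H HX. apply (pull_id d lt a X _ Hwf H). intros S' _.
  exists (fun _ => True). split; auto.
Qed.

Theorem theorem4p11 (G H : Group)
  (dG : G -> G -> R) (dH : H -> H -> R) :
  countable_type G -> countable_type H ->
  proper_left_invariant_metric dG -> proper_left_invariant_metric dH ->
  finite_APC dG -> finite_APC dH ->
  forall d : wreath_car H G -> wreath_car H G -> R,
    wreath_proper_left_invariant_metric d -> finite_APC d.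
Proof.
  intros _ _ HG HH [TG [ltG [aG [XG [[WG [TrG TriG]] [HXG HXG1]]]]]]
    [TH [ltH [aH [XH [[WH [TrH TriH]] [HXH HXH1]]]]]] d Hd.
  pose proof (all_fam dG ltG aG XG WG HXG HXG1) as HSG.
  pose proof (all_fam dH ltH aH XH WH HXH HXH1) as HSH.
  destruct (exists_min ltG WG aG) as [gmin Hgmin].
  pose proof (famr_lemma G H dG dH d TH TG ltH ltG aH gmin HG HH Hd WH WG TrH TrG HSH) as HF.
  assert (WT := ltT_wf ltH ltG WH WG). assert (TrT := ltT_trans ltH ltG TrH TrG).
  destruct Hd as [[Hm0 [Hm1 [Hsym Htri]]] [Hp Hl]].
  destruct HG as [[Gm0 [Gm1 [Gsym Gtri]]] [HpG HlG]].
  destruct (ball_bound d (we H G) (fun z => dG (gone G) (snd z)) Hp) as [s Hs].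
  assert (Hpre : inC d (ltT ltH ltG) (inr aG) (pre (fun _ => True) snd (fun _ => True))).
  { apply (fiber d dG snd (fun _ => True) s (ltT ltH ltG) ltG inr (inr gmin)); auto.
    - intros x. destruct (TriG gmin x) as [E|[E|E]]; [right; exact E|left; subst; auto|].
      exfalso; apply (Hgmin x E).
    - intros w w' t _ _ Ht. rewrite (metric_inv G dG HlG), <- snd_inv_mul.
      apply Hs. rewrite <- wd_inv; auto.
    - intros A [r Hr]. apply (pull_id d (ltT ltH ltG) _ _ _ WT (HF r)).
      intros S' (B & HB & ->). exists (fun x => True /\ B (snd x)). split; auto.
      destruct (classic (exists g0, B g0)) as [[g0 Hg0]|Hn].
      + exists g0. intros w [_ Hw]. apply (Hr B HB); auto.
      + exists (gone G). intros w [_ Hw]. exfalso; apply Hn; eauto. }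
  exists (Tt TH TG), (ltT ltH ltG), (inr aG), (fun _ => True).
  split; [split; [exact WT| split; [exact TrT| apply ltT_tri; auto]]|].
  split; [|exact I].
  apply (pull_id d (ltT ltH ltG) _ _ _ WT Hpre). intros S' _.
  exists (fun x => True /\ True). split; [exists (fun _ => True); split; auto|].
  intros; split; auto.
Qed.
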